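(* Let $\mu,\nu$ be finite measures on $\mathbb R$ with finite first moments, and suppose $\mu\le_E\nu$. Then $(P_\nu-P_\mu)^c\in\mathcal D(\nu(\mathbb R)-\mu(\mathbb R),\overline{\nu}-\overline{\mu})$.
   Context: For a finite measure $\eta$ on $\mathbb R$ with finite first moment, $\overline\eta=\int x\,\eta(dx)$ and $P_\eta(k)=\int(k-x)^+\eta(dx)$, $k\in\mathbb R$. We write $\mu\le_E\nu$ (extended convex order) if $\int f\,d\mu\le\int f\,d\nu$ for all non-negative convex $f:\mathbb R\to\mathbb R_+$. For $u:\mathbb R\to\mathbb R$, $u^c$ is the largest convex function below $u$. For $\alpha\ge0,\beta\in\mathbb R$, $\mathcal D(\alpha,\beta)$ is the set of increasing convex functions $f:\mathbb R\to\mathbb R_+$ with $\lim_{z\to-\infty}f(z)=0$ and $\lim_{z\to\infty}\{f(z)-(\alpha z-\beta)\}=0$. *)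

(* Defs.v *)
From mathcomp Require Import all_boot all_order all_algebra.
From mathcomp Require Import all_classical all_reals all_analysis.
Import Order.TTheory GRing.Theory Num.Theory numFieldNormedType.Exports.

Set Implicit Arguments.
Unset Strict Implicit.
Unset Printing Implicit Defensive.

Local Open Scope classical_set_scope.
Local Open Scope ring_scope.

Section defs.
Variable R : realType.

Definition convex_on_R (f : R -> R) : Prop :=
  convex_function (setT : set (convex_lmodType R^o)) (f : R^o -> R^o).

Definition finite_first_moment (eta : {finite_measure set R -> \bar R}) : Prop :=
  eta.-integrable setT (fun x : R => x%:E).

Definition total_mass (eta : {finite_measure set R -> \bar R}) : R := fine (eta setT).

Definition barycenter (eta : {finite_measure set R -> \bar R}) : R :=
  fine (\int[eta]_x (x%:E))%E.

Definition put_price (eta : {finite_measure set R -> \bar R}) (k : R) : R :=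
  fine (\int[eta]_x ((Num.max (k - x) 0)%:E))%E.

Definition ext_convex_le (mu nu : {finite_measure set R -> \bar R}) : Prop :=
  forall f : R -> R, (forall x, 0 <= f x) -> convex_on_R f ->
    (\int[mu]_x (f x)%:E <= \int[nu]_x (f x)%:E)%E.

Definition is_convex_hull (u f : R -> R) : Prop :=
  [/\ convex_on_R f, (forall x, f x <= u x) &
      (forall g : R -> R, convex_on_R g -> (forall x, g x <= u x) ->
         forall x, g x <= f x)].

Definition classD (alpha beta : R) (f : R -> R) : Prop :=
  [/\ {homo f : x y / x <= y},
      convex_on_R f,
      (forall z, 0 <= f z),
      f z @[z --> -oo] --> 0 &
      (f z - (alpha * z - beta)) @[z --> +oo] --> 0].

End defs.

(* Main.v *)
Require Import Defs.
From mathcomp Require Import all_boot all_order all_algebra.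
From mathcomp Require Import all_classical all_reals all_analysis.
From mathcomp Require Import ring lra measurable_realfun.
Import Order.TTheory GRing.Theory Num.Theory numFieldNormedType.Exports.
Set Implicit Arguments.
Unset Strict Implicit.
Unset Printing Implicit Defensive.
Local Open Scope classical_set_scope.
Local Open Scope ring_scope.

Section S.
Variable R : realType.
Variable eta : {finite_measure set R -> \bar R}.

Lemma int_cst (k : R) : eta.-integrable setT (fun _ => k%:E).
Proof. exact: (finite_measure_integrable_cst eta k measurableT). Qed.

Lemma mphi_max (phi : R -> R) (k : R) : measurable_fun setT phi ->
  measurable_fun setT (fun x => Num.max (phi x - k) 0).
Proof.
move=> mphi.
apply: (@measurable_maxr _ _ _ setT (fun x => phi x - k) (fun=> 0)).
  by apply: measurable_funB => //.
exact: measurable_cst.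
Qed.

Lemma int_max (phi : R -> R) (k : R) : measurable_fun setT phi ->
  eta.-integrable setT (fun x => (phi x)%:E) ->
  eta.-integrable setT (fun x => (Num.max (phi x - k) 0)%:E).
Proof.
move=> mphi iphi.
apply: (@le_integrable _ _ _ eta setT measurableT _ (fun x => (phi x - k)%:E)).
- by apply/measurable_EFinP; exact: mphi_max.
- move=> x _ /=; rewrite lee_fin.
  rewrite ger0_norm ?le_max ?lexx ?orbT //.
  case: (leP (phi x - k) 0) => h.
    by rewrite normr_ge0.
  by rewrite ler_norm.
- have := integrableB measurableT iphi (int_cst k).
  by apply: eq_integrable => // x _ /=; rewrite EFinB.
Qed.

Definition G (phi : R -> R) (k : R) :=
  fine (\int[eta]_x (Num.max (phi x - k) 0)%:E)%E.

Lemma G_ge0 phi k : 0 <= G phi k.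
Proof.
apply: fine_ge0; apply: integral_ge0 => x _; rewrite lee_fin.
by rewrite le_max lexx orbT.
Qed.

Lemma G_mono phi k1 k2 : measurable_fun setT phi ->
  eta.-integrable setT (fun x => (phi x)%:E) ->
  k1 <= k2 -> G phi k2 <= G phi k1.
Proof.
move=> mphi iphi k12; apply: fine_le.
- exact: (integrable_fin_num measurableT (@int_max phi k2 mphi iphi)).
- exact: (integrable_fin_num measurableT (@int_max phi k1 mphi iphi)).
apply: le_integral => //; [exact: int_max|exact: int_max|].
move=> x _; rewrite lee_fin.
rewrite ge_max !le_max; apply/andP; split; apply/orP; [left; lra|by right].
Qed.

Lemma G_seq phi : measurable_fun setT phi ->
  eta.-integrable setT (fun x => (phi x)%:E) ->
  (fun n : nat => G phi n%:R) @ \oo --> 0.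
Proof.
move=> mphi iphi.
pose f_ := fun (n : nat) x => (Num.max (phi x - n%:R) 0)%:E.
have mf_ : forall n, measurable_fun setT (f_ n).
  by move=> n; apply/measurable_EFinP; exact: mphi_max.
have ff : {ae eta, forall x, setT x -> f_ ^~ x @ \oo --> (cst 0%E : R -> \bar R) x}.
  apply: aeW => x _.
  apply: cvg_near_cst.
  near=> n.
  have : phi x <= n%:R by near: n; exact: nbhs_infty_ger.
  move=> hn; rewrite /f_; congr EFin.
  by apply/max_idPr; lra.
have ig : eta.-integrable setT (fun x => `|phi x|%:E).
  have := integrable_abse iphi.
  by apply: eq_integrable => // x _.
have fg : {ae eta, forall x n, setT x -> `|f_ n x| <= `|phi x|%:E}%E.
  apply: aeW => x n _ /=; rewrite lee_fin.
  have n0 : 0 <= n%:R :> R by [].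
  case: (leP (phi x - n%:R) 0) => hh.
    by rewrite normr0 normr_ge0.
  rewrite gtr0_norm //.
  by apply: le_trans (ler_norm _); lra.
have [_ _ h] := dominated_convergence measurableT mf_ (measurable_cst _) ff ig fg.
move: h; rewrite integral0 => h.
have := (fine_cvgP _ 0).1 h.
by case.
Unshelve. all: by end_near.
Qed.

Lemma G_tail phi : measurable_fun setT phi ->
  eta.-integrable setT (fun x => (phi x)%:E) ->
  G phi k @[k --> +oo] --> 0.
Proof.
move=> mphi iphi.
have hs := @G_seq phi mphi iphi.
apply/cvgrPdist_lt => e e0.
have := (cvgrPdist_lt _ _).1 hs e e0.
case=> N _ hN.
exists N%:R; split; first exact: num_real.
move=> k Nk.
have := hN N (leqnn N).
rewrite /= !sub0r !normrN !ger0_norm ?G_ge0 //.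
apply: le_lt_trans.
by apply: G_mono => //; exact: ltW.
Qed.

Hypothesis hx : finite_first_moment eta.

Let mid : measurable_fun setT (fun x : R => x).
Proof. exact: measurable_id. Qed.
Let mN : measurable_fun setT (fun x : R => - x).
Proof. exact: measurable_funN. Qed.
Let iN : eta.-integrable setT (fun x : R => (- x)%:E).
Proof. exact: (integrableN hx). Qed.

Lemma put_G k : put_price eta k = G (fun x => - x) (- k).
Proof.
rewrite /put_price /G; congr fine; apply: eq_integral => x _.
by congr EFin; congr Num.max; lra.
Qed.

Lemma put_decomp k :
  put_price eta k = k * total_mass eta - barycenter eta + G id k.
Proof.
have i1 := @int_max (fun x => - x) (- k) mN iN.
have i3 := @int_max id k mid hx.
have i2 : eta.-integrable setT (fun x => (k%:E - x%:E)%E).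
  have := integrableB measurableT (int_cst k) hx.
  by apply: eq_integrable.
have e1 : (\int[eta]_x (Num.max (k - x) 0)%:E =
   \int[eta]_x ((k%:E - x%:E) + (Num.max (x - k) 0)%:E))%E.
  apply: eq_integral => x _; rewrite -EFinB -EFinD; congr EFin.
  case: (leP (k - x) 0) => h1; case: (leP (x - k) 0) => h2; lra.
have e2 : (\int[eta]_x ((k%:E - x%:E) + (Num.max (x - k) 0)%:E) =
   (\int[eta]_x (k%:E - x%:E)) + \int[eta]_x (Num.max (x - k) 0)%:E)%E.
  by rewrite integralD.
have e3 : (\int[eta]_x (k%:E - x%:E) =
   k%:E * eta setT - \int[eta]_x x%:E)%E.
  rewrite (@integralB _ _ _ eta setT measurableT (fun _ => k%:E) (fun x => x%:E)) //;
    last exact: int_cst.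
  by rewrite integral_cst.
have fM : eta setT \is a fin_num by apply: fin_num_measure.
have fX : (\int[eta]_x x%:E)%E \is a fin_num by exact: integrable_fin_num.
have fG : (\int[eta]_x (Num.max (x - k) 0)%:E)%E \is a fin_num.
  exact: (integrable_fin_num measurableT i3).
rewrite /put_price e1 e2 e3.
have fkM : (k%:E * eta setT)%E \is a fin_num by exact: fin_numM.
rewrite fineD; last 2 first.
- by rewrite fin_numB fX andbT.
- exact: fG.
rewrite fineB //.
by rewrite fineM.
Qed.

Lemma put_lim : put_price eta k @[k --> -oo] --> 0.
Proof.
apply/cvgNy_compNP.
have := @G_tail (fun x => - x) mN iN.
apply: cvg_trans; apply: near_eq_cvg; near=> k.
by rewrite /= put_G opprK.
Unshelve. all: by end_near.
Qed.

Lemma call_lim : G id k @[k --> +oo] --> 0.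
Proof. exact: (@G_tail id mid hx). Qed.
End S.

Section Main.
Variable R : realType.

Lemma convexP (f : R -> R) : convex_on_R f <->
  (forall t x y : R, 0 <= t -> t <= 1 ->
     f (t * x + (1 - t) * y) <= t * f x + (1 - t) * f y).
Proof.
split.
- move=> cf t x y t0 t1.
  have := cf (Itv01 t0 t1) x y; rewrite !inE => /(_ I I).
  by rewrite /= !convRE.
- move=> H t x y _ _.
  rewrite !convRE /=.
  apply: H; [exact: ge0|exact: le1].
Qed.

Lemma convex_max (g : R -> R) :
  (forall t x y, g (t * x + (1 - t) * y) = t * g x + (1 - t) * g y) ->
  convex_on_R (fun x => Num.max (g x) 0).
Proof.
move=> hg; apply/convexP => t x y t0 t1; rewrite hg.
have h1 : g x <= Num.max (g x) 0 by rewrite le_max lexx.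
have h2 : 0 <= Num.max (g x) 0 by rewrite le_max lexx orbT.
have h3 : g y <= Num.max (g y) 0 by rewrite le_max lexx.
have h4 : 0 <= Num.max (g y) 0 by rewrite le_max lexx orbT.
rewrite ge_max; apply/andP; split; nra.
Qed.

Lemma G_dom (mu nu : {finite_measure set R -> \bar R}) (phi : R -> R) k :
  measurable_fun setT phi ->
  mu.-integrable setT (fun x => (phi x)%:E) ->
  nu.-integrable setT (fun x => (phi x)%:E) ->
  (forall t x y, phi (t * x + (1 - t) * y) = t * phi x + (1 - t) * phi y) ->
  ext_convex_le mu nu -> G mu phi k <= G nu phi k.
Proof.
move=> mphi im inu haff hle.
apply: fine_le.
- exact: (integrable_fin_num measurableT (@int_max _ mu phi k mphi im)).
- exact: (integrable_fin_num measurableT (@int_max _ nu phi k mphi inu)).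
apply: hle.
  by move=> x; rewrite le_max lexx orbT.
apply: (@convex_max (fun x => phi x - k)) => t x y.
rewrite haff; ring.
Qed.

Lemma convex_mono (f : R -> R) : convex_on_R f -> (forall x, 0 <= f x) ->
  f z @[z --> -oo] --> 0 -> {homo f : x y / x <= y}.
Proof.
move=> fc f0 fl x y xy.
rewrite leNgt; apply/negP => fyx.
have d0 : 0 < f x - f y by rewrite subr_gt0.
have := (cvgrPdist_lt _ _).1 fl _ d0.
case=> M [_ hM].
pose z := Num.min (M - 1) (x - 1).
have zM : z < M by rewrite /z gt_min; apply/orP; left; lra.
have zx : z < x by rewrite /z gt_min; apply/orP; right; lra.
have := hM z zM; rewrite sub0r normrN ger0_norm ?f0 // => fz.
have yz : 0 < y - z by lra.
pose t := (y - x) / (y - z).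
have t0 : 0 <= t by rewrite /t divr_ge0 //; lra.
have t1 : t <= 1 by rewrite /t ler_pdivrMr //; lra.
have := (convexP f).1 fc t z y t0 t1.
have -> : t * z + (1 - t) * y = x.
  rewrite /t; field; lra.
have := f0 z; have := f0 y.
nra.
Qed.

End Main.

Unset Implicit Arguments.
Set Strict Implicit.
Theorem corollary2p5 (R : realType) (mu nu : {finite_measure set R -> \bar R}) :
  finite_first_moment mu -> finite_first_moment nu ->
  ext_convex_le mu nu ->
  exists f : R -> R,
    is_convex_hull (fun k => put_price nu k - put_price mu k) f /\
    classD (total_mass nu - total_mass mu) (barycenter nu - barycenter mu) f.
Proof.
move=> hm hn hle.
set u := fun k => put_price nu k - put_price mu k.
set al := total_mass nu - total_mass mu.
set be := barycenter nu - barycenter mu.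
have mid : measurable_fun setT (fun x : R => x) by exact: measurable_id.
have mN : measurable_fun setT (fun x : R => - x) by exact: measurable_funN.
have Pdom k : put_price mu k <= put_price nu k.
  rewrite !put_G //; apply: G_dom => //.
  - exact: (integrableN hm).
  - exact: (integrableN hn).
  - by move=> t x y; ring.
have Cdom k : G mu id k <= G nu id k.
  by apply: G_dom => //; move=> t x y.
have u0 k : 0 <= u k by rewrite /u subr_ge0.
have uaff k : u k = (al * k - be) + (G nu id k - G mu id k).
  by rewrite /u /al /be (put_decomp hn) (put_decomp hm); ring.
pose S := fun g : R -> R => convex_on_R g /\ forall z, g z <= u z.
pose f := fun x => sup [set g x | g in S].
have hub x : has_ubound [set g x | g in S].
  by exists (u x) => _ [g [_ gu] <-]; exact: gu.
have Sub g x : S g -> g x <= f x.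
  by move=> Sg; apply: (ub_le_sup (hub x)); exists g.
have S0 : S (fun=> 0).
  split; last exact: u0.
  by apply/convexP => t x y _ _; rewrite !mulr0 addr0.
have ne x : [set g x | g in S] !=set0 by exists 0; exists (fun=> 0).
have fle x : f x <= u x.
  by apply: ge_sup => // _ [g [_ gu] <-]; exact: gu.
have fconv : convex_on_R f.
  apply/convexP => t x y t0 t1.
  apply: ge_sup => // _ [g [gc gu] <-].
  have := (convexP g).1 gc t x y t0 t1.
  have := Sub g x (conj gc gu); have := Sub g y (conj gc gu).
  nra.
have f0 x : 0 <= f x by exact: (Sub _ x S0).
have Saff : S (fun z => al * z - be).
  split.
    apply/convexP => t x y _ _.
    have -> : al * (t * x + (1 - t) * y) - be =
      t * (al * x - be) + (1 - t) * (al * y - be) by ring.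
    exact: lexx.
  by move=> z; rewrite uaff lerDl subr_ge0.
have flow x : al * x - be <= f x by exact: Sub _ x Saff.
have flimN : f z @[z --> -oo] --> 0.
  apply: (@squeeze_cvgr _ _ _ _ (fun=> 0) u).
  - by near=> z; rewrite f0 fle.
  - exact: cvg_cst.
  - rewrite -(subr0 0); apply: cvgB; exact: put_lim.
exists f; split.
  split => // g gc gu x.
  by apply: Sub.
split => //.
- exact: convex_mono.
- apply: (@squeeze_cvgr _ _ _ _ (fun=> 0) (fun z => G nu id z - G mu id z)).
  - near=> z; rewrite subr_ge0 flow /=.
    by rewrite lerBlDl -uaff fle.
  - exact: cvg_cst.
  - rewrite -(subr0 0); apply: cvgB; exact: call_lim.
Unshelve. all: by end_near.
Qed.
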